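(* Let $A$ be a locally-complex Cayley--Dickson algebra and let $f(x)=x^n+a_{n-1}x^{n-1}+\dots+a_0\in A[x]$ be monic with $n\ge1$. Then every root $r\in A$ of $f(x)$ and every root $r\in A$ of $f'(x)$ satisfies $|r|<R_1(f)$, $|r|<R_2(f)$ and $|r|\le R_3(f)$, where $R_1(f)=\sqrt{1+\sum_{k=0}^{n-1}|a_k|^2}$, $R_2(f)=1+\max_{0\le k\le n-1}|a_k|$, $R_3(f)=\max\{1,\sum_{k=0}^{n-1}|a_k|\}$. In terms of the spectral radius: $\rho(f),\rho(f')<R_1(f)$, $\rho(f),\rho(f')<R_2(f)$, $\rho(f),\rho(f')\le R_3(f)$.
   Context: Real Cayley--Dickson algebras: $A_0=\mathbb{R}$ with identity involution, $A_{k+1}=A_k\{\gamma_k\}=A_k\times A_k$ with product $(a,b)(c,d)=(ac+\gamma_k\bar d b,\ da+b\bar c)$ and involution $\overline{(a,b)}=(\bar a,-b)$. A real unital algebra is locally-complex if every non-real element generates a subalgebra isomorphic to $\mathbb{C}$ (for Cayley--Dickson algebras: all $\gamma_k=-1$ up to isomorphism). Norm $\mathrm{n}(\lambda)=\bar\lambda\lambda$, $|\lambda|=\sqrt{\mathrm{n}(\lambda)}$ (Euclidean norm). $A[x]=A\otimes_{\mathbb{R}}\mathbb{R}[x]$ with central $x$; substitution $f(r)=\sum_k a_k(r^k)$; formal derivative $f'(x)=\sum_k ka_kx^{k-1}$. The spectral radius of $g\in A[x]$ is $\rho(g)=\sup\{|\lambda|:\lambda\in A,\ g(\lambda)=0\}$.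 *)

(* Defs.v *)
(* Real Cayley--Dickson algebras A_m (dim 2^m) over a
   realType R, with all gamma_k = -1 (the locally-complex ones). *)
From HB Require Import structures.
From mathcomp Require Import all_boot all_order all_algebra.
From mathcomp Require Import reals.
Set Implicit Arguments. Unset Strict Implicit. Unset Printing Implicit Defensive.
Import Order.TTheory GRing.Theory Num.Theory.
Local Open Scope ring_scope.

Section CD.
Variable R : realType.

Fixpoint cd (m : nat) : Type :=
  match m with 0%N => R | S k => (cd k * cd k)%type end.

Fixpoint cd_zero (m : nat) : cd m :=
  match m return cd m with 0%N => 0 | S k => (cd_zero k, cd_zero k) end.

Fixpoint cd_real (m : nat) (c : R) : cd m :=
  match m return cd m with 0%N => c | S k => (cd_real k c, cd_zero k) end.

Definition cd_one (m : nat) : cd m := cd_real m 1.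

Fixpoint cd_add (m : nat) : cd m -> cd m -> cd m :=
  match m return cd m -> cd m -> cd m with
  | 0%N => fun x y => x + y
  | S k => fun x y => (cd_add x.1 y.1, cd_add x.2 y.2)
  end.

Fixpoint cd_opp (m : nat) : cd m -> cd m :=
  match m return cd m -> cd m with
  | 0%N => fun x => - x
  | S k => fun x => (cd_opp x.1, cd_opp x.2)
  end.

Fixpoint cd_conj (m : nat) : cd m -> cd m :=
  match m return cd m -> cd m with
  | 0%N => fun x => x
  | S k => fun x => (cd_conj x.1, cd_opp x.2)
  end.

(* product (a,b)(c,d) = (ac + gamma conj(d) b, d a + b conj(c)), gamma = -1 *)
Fixpoint cd_mul (m : nat) : cd m -> cd m -> cd m :=
  match m return cd m -> cd m -> cd m with
  | 0%N => fun x y => x * y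
  | S k => fun x y =>
      (cd_add (cd_mul x.1 y.1) (cd_opp (cd_mul (cd_conj y.2) x.2)),
       cd_add (cd_mul y.2 x.1) (cd_mul x.2 (cd_conj y.1)))
  end.

Fixpoint cd_re (m : nat) : cd m -> R :=
  match m return cd m -> R with
  | 0%N => fun x => x
  | S k => fun x => cd_re x.1
  end.

(* norm n(l) = conj(l) l, which is real; |l| = sqrt(n(l)) *)
Definition cd_n (m : nat) (l : cd m) : R := cd_re (cd_mul (cd_conj l) l).
Definition cd_abs (m : nat) (l : cd m) : R := Num.sqrt (cd_n l).

(* powers r^k (Cayley--Dickson algebras are power-associative) *)
Fixpoint cd_pow (m : nat) (r : cd m) (k : nat) : cd m :=
  match k with 0%N => cd_one m | S j => cd_mul r (cd_pow r j) end.

(* polynomials in A[x] as coefficient lists [a_0; a_1; ...] *)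
Definition cd_peval (m : nat) (p : seq (cd m)) (r : cd m) : cd m :=
  \big[@cd_add m/cd_zero m]_(i < size p) cd_mul (nth (cd_zero m) p i) (cd_pow r i).

Definition cd_deriv (m : nat) (p : seq (cd m)) : seq (cd m) :=
  [seq cd_mul (cd_real m i%:R) (nth (cd_zero m) p i) | i <- iota 1 (size p).-1].

(* the three bounds, for f = x^n + a_{n-1}x^{n-1} + ... + a_0, a = [a_0;...;a_{n-1}] *)
Definition R1 (m : nat) (a : seq (cd m)) : R :=
  Num.sqrt (1 + \sum_(k < size a) cd_abs (nth (cd_zero m) a k) ^+ 2).
Definition R2 (m : nat) (a : seq (cd m)) : R :=
  1 + \big[Num.max/0]_(k < size a) cd_abs (nth (cd_zero m) a k).
Definition R3 (m : nat) (a : seq (cd m)) : R :=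
  Num.max 1 (\sum_(k < size a) cd_abs (nth (cd_zero m) a k)).

End CD.

(* Main.v *)
Require Import Defs.
From HB Require Import structures.
From mathcomp Require Import all_boot all_order all_algebra.
From mathcomp Require Import reals.
From mathcomp Require Import ring lra.
Set Implicit Arguments. Unset Strict Implicit. Unset Printing Implicit Defensive.
Import Order.TTheory GRing.Theory Num.Theory.
Local Open Scope ring_scope.

Section Alg.
Variable R : realType.

Fixpoint ip (m : nat) : cd R m -> cd R m -> R :=
  match m return cd R m -> cd R m -> R with
  | 0%N => fun x y => x * y
  | S k => fun x y => ip x.1 y.1 + ip x.2 y.2
  end.

Fixpoint cd_scale (m : nat) (c : R) : cd R m -> cd R m :=
  match m return cd R m -> cd R m with
  | 0%N => fun x => c * x
  | S k => fun x => (cd_scale c x.1, cd_scale c x.2)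
  end.

Notation zero := (cd_zero R _).
Implicit Types c d : R.

Lemma addC m (x y : cd R m) : cd_add x y = cd_add y x.
Proof. elim: m x y => [|m IH] /= x y; first exact: addrC. by rewrite IH [cd_add x.2 _]IH. Qed.
Lemma addA m (x y z : cd R m) : cd_add x (cd_add y z) = cd_add (cd_add x y) z.
Proof. elim: m x y z => [|m IH] /= x y z; first exact: addrA. by rewrite IH [cd_add x.2 _]IH. Qed.
Lemma add0 m (x : cd R m) : cd_add zero x = x.
Proof. elim: m x => [|m IH] /= x; first exact: add0r. by rewrite !IH; case: x. Qed.
Lemma addN m (x : cd R m) : cd_add x (cd_opp x) = zero.
Proof. elim: m x => [|m IH] /= x; first exact: subrr. by rewrite !IH. Qed.
Lemma oppK m (x : cd R m) : cd_opp (cd_opp x) = x.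
Proof. elim: m x => [|m IH] /= x; first exact: opprK. by rewrite !IH; case: x. Qed.
Lemma opp_add m (x y : cd R m) : cd_opp (cd_add x y) = cd_add (cd_opp x) (cd_opp y).
Proof. elim: m x y => [|m IH] /= x y; first exact: opprD. by rewrite !IH. Qed.
Lemma opp_zero m : cd_opp (cd_zero R m) = zero.
Proof. elim: m => [|m IH] /=; first exact: oppr0. by rewrite !IH. Qed.

Lemma scale_add m c (x y : cd R m) : cd_scale c (cd_add x y) = cd_add (cd_scale c x) (cd_scale c y).
Proof. elim: m x y => [|m IH] /= x y; first exact: mulrDr. by rewrite !IH. Qed.
Lemma scale_addl m c d (x : cd R m) : cd_scale (c + d) x = cd_add (cd_scale c x) (cd_scale d x).
Proof. elim: m x => [|m IH] /= x; first exact: mulrDl. by rewrite !IH. Qed.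
Lemma scale_scale m c d (x : cd R m) : cd_scale c (cd_scale d x) = cd_scale (c * d) x.
Proof. elim: m x => [|m IH] /= x; first exact: mulrA. by rewrite !IH. Qed.
Lemma scale1 m (x : cd R m) : cd_scale 1 x = x.
Proof. elim: m x => [|m IH] /= x; first exact: mul1r. by rewrite !IH; case: x. Qed.
Lemma scale_zero m c : cd_scale c (cd_zero R m) = zero.
Proof. elim: m => [|m IH] /=; first exact: mulr0. by rewrite !IH. Qed.
Lemma scale_opp m c (x : cd R m) : cd_scale c (cd_opp x) = cd_opp (cd_scale c x).
Proof. elim: m x => [|m IH] /= x; first exact: mulrN. by rewrite !IH. Qed.
Lemma scaleN m c (x : cd R m) : cd_scale (- c) x = cd_opp (cd_scale c x).
Proof. elim: m x => [|m IH] /= x; first exact: mulNr. by rewrite !IH. Qed.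
Lemma real0 m : cd_real m (0:R) = zero.
Proof. by elim: m => [|m IH] //=; rewrite IH. Qed.
Lemma real_add m c d : cd_real m (c + d) = cd_add (cd_real m c) (cd_real m d).
Proof. elim: m => [|m IH] //=; by rewrite IH -{1}(add0 (cd_zero R m)). Qed.
Lemma scale_real m c d : cd_scale c (cd_real m d) = cd_real m (c * d).
Proof. elim: m => [|m IH] //=; by rewrite IH scale_zero. Qed.
Lemma opp_real m c : cd_opp (cd_real m c) = cd_real m (- c).
Proof. elim: m => [|m IH] //=; by rewrite IH opp_zero. Qed.

Lemma conjK m (x : cd R m) : cd_conj (cd_conj x) = x.
Proof. elim: m x => [|m IH] //= x; by rewrite IH oppK; case: x. Qed.
Lemma conj_add m (x y : cd R m) : cd_conj (cd_add x y) = cd_add (cd_conj x) (cd_conj y).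
Proof. elim: m x y => [|m IH] //= x y; by rewrite IH opp_add. Qed.
Lemma conj_opp m (x : cd R m) : cd_conj (cd_opp x) = cd_opp (cd_conj x).
Proof. elim: m x => [|m IH] //= x; by rewrite IH. Qed.
Lemma conj_scale m c (x : cd R m) : cd_conj (cd_scale c x) = cd_scale c (cd_conj x).
Proof. elim: m x => [|m IH] //= x; by rewrite IH scale_opp. Qed.
Lemma conj_zero m : cd_conj (cd_zero R m) = zero.
Proof. elim: m => [|m IH] //=; by rewrite IH opp_zero. Qed.
Lemma conj_real m c : cd_conj (cd_real m c) = cd_real m c.
Proof. elim: m => [|m IH] //=; by rewrite IH opp_zero. Qed.

Lemma addACA m (a b c d : cd R m) :
  cd_add (cd_add a b) (cd_add c d) = cd_add (cd_add a c) (cd_add b d).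
Proof. by rewrite -!addA [cd_add b (cd_add c d)]addA [cd_add b c]addC -addA. Qed.

Lemma mul_add m : (forall x y z : cd R m, cd_mul (cd_add x y) z = cd_add (cd_mul x z) (cd_mul y z))
  /\ (forall x y z : cd R m, cd_mul z (cd_add x y) = cd_add (cd_mul z x) (cd_mul z y)).
Proof.
elim: m => [|m [IHl IHr]] /=; first by split=> x y z; [exact: mulrDl|exact: mulrDr].
split=> x y z /=.
all: by rewrite ?conj_add !(IHl, IHr, opp_add); congr pair; rewrite addACA.
Qed.
Definition mul_addl m := proj1 (mul_add m).
Definition mul_addr m := proj2 (mul_add m).

Lemma scale0 m (x : cd R m) : cd_scale 0 x = zero.
Proof. elim: m x => [|m IH] /= x; first exact: mul0r. by rewrite !IH. Qed.

Lemma mul_opp m : (forall x y : cd R m, cd_mul (cd_opp x) y = cd_opp (cd_mul x y))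
  /\ (forall x y : cd R m, cd_mul x (cd_opp y) = cd_opp (cd_mul x y)).
Proof.
elim: m => [|m [IHl IHr]] /=; first by split=> x y; [exact: mulNr|exact: mulrN].
split=> x y /=; by rewrite ?conj_opp !(IHl, IHr, opp_add).
Qed.
Definition mul_oppl m := proj1 (mul_opp m).
Definition mul_oppr m := proj2 (mul_opp m).

Lemma mul_scale m : (forall c (x y : cd R m), cd_mul (cd_scale c x) y = cd_scale c (cd_mul x y))
  /\ (forall c (x y : cd R m), cd_mul x (cd_scale c y) = cd_scale c (cd_mul x y)).
Proof.
elim: m => [|m [IHl IHr]] /=.
  by split=> c x y /=; [rewrite mulrA | rewrite mulrCA].
split=> c x y /=; by rewrite ?conj_scale !(IHl, IHr, scale_add, scale_opp).
Qed.
Definition mul_scalel m := proj1 (mul_scale m).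
Definition mul_scaler m := proj2 (mul_scale m).

Lemma mul0 m (x : cd R m) : cd_mul (cd_zero R m) x = zero.
Proof. by rewrite -{1}(scale0 (cd_zero R m)) mul_scalel scale0. Qed.
Lemma cmulr0 m (x : cd R m) : cd_mul x (cd_zero R m) = zero.
Proof. by rewrite -{1}(scale0 (cd_zero R m)) mul_scaler scale0. Qed.
Lemma cadd0r m (x : cd R m) : cd_add x zero = x.
Proof. by rewrite addC add0. Qed.

Lemma mul_real m : (forall c (x : cd R m), cd_mul (cd_real m c) x = cd_scale c x)
  /\ (forall c (x : cd R m), cd_mul x (cd_real m c) = cd_scale c x).
Proof.
elim: m => [|m [IHl IHr]] /=.
  by split=> c x //; rewrite mulrC.
split=> c x /=; rewrite ?conj_real ?conj_zero ?mul0 ?cmulr0 ?opp_zero ?add0 ?cadd0r; by rewrite !(IHl, IHr).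
Qed.
Definition mul_reall m := proj1 (mul_real m).
Definition mul_realr m := proj2 (mul_real m).

Lemma conj_mul m (x y : cd R m) : cd_conj (cd_mul x y) = cd_mul (cd_conj y) (cd_conj x).
Proof.
elim: m x y => [|m IH] /= x y; first exact: mulrC.
rewrite conj_add conj_opp !IH opp_add conj_opp !conjK mul_oppl; congr pair; [by rewrite mul_oppr oppK | by rewrite !mul_oppl addC].
Qed.

Lemma ipC m (x y : cd R m) : ip x y = ip y x.
Proof. elim: m x y => [|m IH] /= x y; first exact: mulrC. by rewrite IH [ip x.2 _]IH. Qed.
Lemma ip_addl m (x y z : cd R m) : ip (cd_add x y) z = ip x z + ip y z.
Proof. elim: m x y z => [|m IH] /= x y z; first exact: mulrDl. rewrite !IH; ring. Qed.
Lemma ip_oppl m (x y : cd R m) : ip (cd_opp x) y = - ip x y.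
Proof. elim: m x y => [|m IH] /= x y; first exact: mulNr. rewrite !IH; ring. Qed.
Lemma ip_scalel m c (x y : cd R m) : ip (cd_scale c x) y = c * ip x y.
Proof. elim: m x y => [|m IH] /= x y; first exact: (esym (mulrA _ _ _)). rewrite !IH; ring. Qed.
Lemma ip0l m (y : cd R m) : ip zero y = 0.
Proof. elim: m y => [|m IH] /= y; first exact: mul0r. rewrite !IH; ring. Qed.
Lemma ip_oppr m (x y : cd R m) : ip x (cd_opp y) = - ip x y.
Proof. by rewrite ipC ip_oppl ipC. Qed.
Lemma ip_addr m (x y z : cd R m) : ip z (cd_add x y) = ip z x + ip z y.
Proof. by rewrite ipC ip_addl ipC [ip y z]ipC. Qed.
Lemma ip_scaler m c (x y : cd R m) : ip y (cd_scale c x) = c * ip y x.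
Proof. by rewrite ipC ip_scalel ipC. Qed.
Lemma ip_conj m (x y : cd R m) : ip (cd_conj x) (cd_conj y) = ip x y.
Proof. elim: m x y => [|m IH] /= x y //. by rewrite !IH ip_oppl ip_oppr opprK. Qed.
Lemma ip_reall m c (x : cd R m) : ip (cd_real m c) x = c * cd_re x.
Proof. elim: m x => [|m IH] /= x //. by rewrite IH ip0l addr0. Qed.
Lemma ip_ge0 m (x : cd R m) : 0 <= ip x x.
Proof. elim: m x => [|m IH] /= x; first exact: sqr_ge0. exact: addr_ge0. Qed.
Lemma re_add m (x y : cd R m) : cd_re (cd_add x y) = cd_re x + cd_re y.
Proof. by elim: m x y => [|m IH] /= x y. Qed.
Lemma re_opp m (x : cd R m) : cd_re (cd_opp x) = - cd_re x.
Proof. by elim: m x => [|m IH] /= x. Qed.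
Lemma re_mul m (x y : cd R m) : cd_re (cd_mul x y) = ip (cd_conj x) y.
Proof.
elim: m x y => [|m IH] /= x y //.
by rewrite re_add re_opp !IH conjK ip_oppl [ip x.2 _]ipC.
Qed.
Lemma cd_nE m (x : cd R m) : cd_n x = ip x x.
Proof. by rewrite /cd_n re_mul conjK. Qed.

Lemma adj m : (forall a x y : cd R m, ip (cd_mul a x) y = ip a (cd_mul y (cd_conj x)))
  /\ (forall a x y : cd R m, ip (cd_mul x a) y = ip a (cd_mul (cd_conj x) y)).
Proof.
elim: m => [|m [IHr IHl]] /=.
  by split=> a x y /=; [rewrite mulrAC -mulrA | rewrite mulrCA mulrA].
split=> a x y /=.
  rewrite !ip_addl !ip_oppl !ip_addr !ip_oppr conj_opp conjK !mul_oppl ?oppK !ip_oppr.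
  rewrite (IHr a.1 x.1) (IHl a.2 (cd_conj x.2)) (IHl a.1 x.2) (IHr a.2) conjK.
  rewrite conjK; lra.
rewrite !ip_addl !ip_oppl !ip_addr !ip_oppr !mul_oppr ?oppK !ip_oppr.
rewrite (IHl a.1 x.1) (IHr (cd_conj a.2) x.2) (IHl (cd_conj a.1) x.2) (IHr a.2).
have h1 : ip (cd_conj a.2) (cd_mul y.1 (cd_conj x.2)) = ip a.2 (cd_mul x.2 (cd_conj y.1)).
  by rewrite -ip_conj conjK conj_mul conjK.
have h2 : ip (cd_conj a.1) (cd_mul (cd_conj x.2) y.2) = ip a.1 (cd_mul (cd_conj y.2) x.2).
  by rewrite -ip_conj conjK conj_mul conjK.
rewrite h1 h2 mul_oppl ip_oppr; lra.
Qed.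
Definition adjr m := proj1 (adj m).
Definition adjl m := proj2 (adj m).

Lemma re_real m c : cd_re (cd_real m c) = c.
Proof. by elim: m. Qed.

Lemma conj_decomp m (x : cd R m) : cd_conj x = cd_add (cd_real m (2 * cd_re x)) (cd_opp x).
Proof.
elim: m x => [|m IH] /= x; first lra.
by rewrite IH add0; case: x.
Qed.

Lemma mul_conj m : (forall x : cd R m, cd_mul x (cd_conj x) = cd_real m (ip x x))
  /\ (forall x : cd R m, cd_mul (cd_conj x) x = cd_real m (ip x x)).
Proof.
elim: m => [|m [IH1 IH2]] /=; first by split=> x //; rewrite mulrC.
split=> x /=.
  by rewrite conj_opp conjK !mul_oppl oppK IH1 IH2 real_add [cd_add (cd_opp _) _]addC addN.
by rewrite !mul_oppr !mul_oppl oppK !IH2 real_add addN.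
Qed.

Lemma CS2 (A1 B1 C1 A2 B2 C2 : R) : 0 <= A1 -> 0 <= B1 -> 0 <= A2 -> 0 <= B2 ->
  C1 ^+ 2 <= A1 * B1 -> C2 ^+ 2 <= A2 * B2 -> (C1 + C2) ^+ 2 <= (A1 + A2) * (B1 + B2).
Proof.
move=> a1 b1 a2 b2 h1 h2.
have h3 : (2 * C1 * C2) ^+ 2 <= (A1 * B2 + A2 * B1) ^+ 2.
  have : (C1 * C2) ^+ 2 <= (A1 * B1) * (A2 * B2).
    rewrite exprMn; apply: ler_pM => //; exact: sqr_ge0.
  move=> h; have h5 := sqr_ge0 (A1 * B2 - A2 * B1).
  have -> : (2 * C1 * C2) ^+ 2 = 4 * (C1 * C2) ^+ 2 by ring.
  have -> : (A1 * B2 + A2 * B1) ^+ 2 = (A1 * B2 - A2 * B1) ^+ 2 + 4 * ((A1 * B1) * (A2 * B2)) by ring.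
  lra.
have h4 : 2 * C1 * C2 <= A1 * B2 + A2 * B1.
  have hv : 0 <= A1 * B2 + A2 * B1 by rewrite addr_ge0 ?mulr_ge0.
  case: (lerP (2 * C1 * C2) (A1 * B2 + A2 * B1)) => // hn.
  have := ltr_pM hv hv hn hn; rewrite !expr2 in h3; lra.
have -> : (C1 + C2) ^+ 2 = C1 ^+ 2 + C2 ^+ 2 + 2 * C1 * C2 by ring.
have -> : (A1 + A2) * (B1 + B2) = A1 * B1 + A2 * B2 + (A1 * B2 + A2 * B1) by ring.
lra.
Qed.

Lemma CS m (x y : cd R m) : ip x y ^+ 2 <= ip x x * ip y y.
Proof.
elim: m x y => [|m IH] /= x y; first by rewrite exprMn !expr2 mulrACA lexx.
apply: CS2 => //; exact: ip_ge0.
Qed.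

Lemma CSabs m (x y : cd R m) : `|ip x y| <= Num.sqrt (ip x x) * Num.sqrt (ip y y).
Proof.
rewrite -sqrtrM ?ip_ge0 // -sqrtr_sqr.
by rewrite ler_sqrt ?CS // mulr_ge0 ?ip_ge0.
Qed.

Section Span.
Variables (m : nat) (r : cd R m).
Let t := cd_re r.
Let N := ip r r.
Definition E a b := cd_add (cd_real m a) (cd_scale b r).

Lemma E_add a b c d : cd_add (E a b) (E c d) = E (a + c) (b + d).
Proof. by rewrite /E addACA real_add scale_addl. Qed.
Lemma E_real a : cd_real m a = E a 0.
Proof. by rewrite /E scale0 cadd0r. Qed.
Lemma E_scale b : cd_scale b r = E 0 b.
Proof. by rewrite /E real0 add0. Qed.
Lemma E_r : r = E 0 1.
Proof. by rewrite -E_scale scale1. Qed.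
Lemma E_sc c a b : cd_scale c (E a b) = E (c * a) (c * b).
Proof. by rewrite /E scale_add scale_real scale_scale. Qed.

Lemma rr : cd_mul r r = E (- N) (2 * t).
Proof.
have h := (proj1 (mul_conj m)) r.
rewrite conj_decomp mul_addr mul_realr mul_oppr -/N -/t in h.
have -> : cd_mul r r = cd_add (cd_scale (2 * t) r) (cd_opp (cd_real m N)).
  by rewrite -h opp_add oppK addA addN add0.
by rewrite opp_real E_real E_scale E_add !add0r addr0.
Qed.

Lemma rE c d : cd_mul r (E c d) = E (- (d * N)) (c + 2 * t * d).
Proof.
rewrite /E mul_addr mul_realr mul_scaler rr -/(E _ _) E_scale E_sc E_add.
congr E; ring.
Qed.

Lemma E_mul a b c d : cd_mul (E a b) (E c d) = E (a * c - b * d * N) (a * d + b * c + 2 * t * b * d).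
Proof.
rewrite {1}/E mul_addl mul_reall mul_scalel rE !E_sc E_add; congr E; ring.
Qed.

Lemma E_conj a b : cd_conj (E a b) = E (a + 2 * t * b) (- b).
Proof.
rewrite /E conj_add conj_real conj_scale conj_decomp -/t scale_add scale_opp -scaleN.
rewrite scale_real !E_real !E_scale !E_add; congr E; ring.
Qed.

Lemma E_ip a b c d : ip (E a b) (E c d) = a * c + (a * d + b * c) * t + b * d * N.
Proof.
rewrite /E !ip_addl !ip_addr !ip_scalel !ip_scaler !ip_reall [ip r (cd_real _ _)]ipC.
rewrite ip_reall !re_real -/t -/N; ring.
Qed.

Fixpoint pq (k : nat) : R * R :=
  match k with
  | 0%N => (1, 0)
  | S j => (- ((pq j).2 * N), (pq j).1 + 2 * t * (pq j).2)
  end.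

Lemma pow_E k : cd_pow r k = E (pq k).1 (pq k).2.
Proof.
elim: k => [|k IH] /=; first by rewrite /cd_one E_real.
by rewrite IH rE.
Qed.

Lemma nf_pow k : (pq k).1 ^+ 2 + 2 * (pq k).1 * (pq k).2 * t + (pq k).2 ^+ 2 * N = N ^+ k.
Proof.
elim: k => [|k IH] /=; first by rewrite expr0; ring.
by rewrite [N ^+ k.+1]exprS -IH; ring.
Qed.

Lemma N_ge0 : 0 <= N.
Proof. exact: ip_ge0. Qed.

Lemma sqrtX (x : R) k : 0 <= x -> Num.sqrt (x ^+ k) = Num.sqrt x ^+ k.
Proof.
move=> hx; elim: k => [|k IH]; first by rewrite !expr0 sqrtr1.
by rewrite !exprS sqrtrM // IH.
Qed.

Lemma w_norm i n : ip (cd_mul (cd_pow r n) (cd_conj (cd_pow r i))) (cd_mul (cd_pow r n) (cd_conj (cd_pow r i))) = N ^+ (n + i).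
Proof.
rewrite !pow_E E_conj E_mul E_ip exprD -nf_pow -(nf_pow i).
set a := (pq n).1; set b := (pq n).2; set c := (pq i).1; set d := (pq i).2.
ring.
Qed.

Lemma term_bound (c : cd R m) i n :
  - (cd_abs c * cd_abs r ^+ (n + i)) <= ip (cd_mul c (cd_pow r i)) (cd_pow r n).
Proof.
rewrite adjr.
have h := CSabs c (cd_mul (cd_pow r n) (cd_conj (cd_pow r i))).
rewrite w_norm sqrtX ?N_ge0 // in h.
have h2 := ler_norm (- ip c (cd_mul (cd_pow r n) (cd_conj (cd_pow r i)))).
rewrite normrN in h2.
rewrite /cd_abs !cd_nE -/N; lra.
Qed.

Lemma lead_term (L : R) n :
  ip (cd_mul (cd_real m L) (cd_pow r n)) (cd_pow r n) = L * cd_abs r ^+ (2 * n).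
Proof.
rewrite mul_reall ip_scalel pow_E E_ip /cd_abs cd_nE -/N exprM sqr_sqrtr ?N_ge0 //.
by rewrite -nf_pow; ring.
Qed.
End Span.
Lemma sq_le (u v : R) : 0 <= u -> u <= v -> u ^+ 2 <= v ^+ 2.
Proof. by move=> u0 uv; rewrite !expr2; apply: ler_pM. Qed.

Lemma CSsum (d : nat) (u v : nat -> R) :
  (\sum_(i < d) u i * v i) ^+ 2 <= (\sum_(i < d) u i ^+ 2) * (\sum_(i < d) v i ^+ 2).
Proof.
elim: d => [|d IH]; first by rewrite !big_ord0 expr0n mulr0.
rewrite !big_ord_recr /=; apply: CS2 => //.
- by apply: sumr_ge0 => i _; exact: sqr_ge0.
- by apply: sumr_ge0 => i _; exact: sqr_ge0.
- exact: sqr_ge0.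
- exact: sqr_ge0.
- by rewrite exprMn.
Qed.

Lemma real_bounds (d : nat) (b : nat -> R) (x : R) :
  (forall i, 0 <= b i) -> 0 <= x -> x ^+ d <= \sum_(i < d) b i * x ^+ i ->
  (forall B, \sum_(i < d) b i ^+ 2 <= B -> x ^+ 2 < 1 + B) /\
  (forall M, (forall i, (i < d)%N -> b i <= M) -> x < 1 + M) /\
  (forall S, \sum_(i < d) b i <= S -> x <= Num.max 1 S).
Proof.
move=> b0 x0 h.
have d0 : (0 < d)%N.
  case: d h => // h; rewrite big_ord0 expr0 in h; lra.
have Sb0 : 0 <= \sum_(i < d) b i by apply: sumr_ge0.
have Sb20 : 0 <= \sum_(i < d) b i ^+ 2 by apply: sumr_ge0 => i _; exact: sqr_ge0.
have hM : forall M, (forall i, (i < d)%N -> b i <= M) ->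
    \sum_(i < d) b i * x ^+ i <= M * \sum_(i < d) x ^+ i.
  move=> M hb; rewrite mulr_sumr; apply: ler_sum => i _.
  by apply: ler_wpM2r; [exact: exprn_ge0 | exact: hb].
have hCS : (\sum_(i < d) b i * x ^+ i) ^+ 2 <= (\sum_(i < d) b i ^+ 2) * \sum_(i < d) (x ^+ 2) ^+ i.
  by under [X in _ <= _ * X]eq_bigr => i _ do rewrite -exprM mulnC exprM; exact: CSsum.
have hxd : 0 <= x ^+ d by exact: exprn_ge0.
case: (lerP x 1) => x1.
  have hx1 : x < 1 \/ x = 1 by move: x1; rewrite le_eqVlt => /orP [/eqP ->|->]; [right|left].
  split; [|split].
  - move=> B hB; case: hx1 => [hx|ex].
      have := ler_wpM2l x0 (ltW hx); rewrite expr2; lra.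
    rewrite ex in h *.
    have h1 : 1 <= \sum_(i < d) b i by move: h; rewrite expr1n; under eq_bigr => i _ do rewrite expr1n mulr1.
    have := CSsum d b (fun=> 1).
    under eq_bigr => i _ do rewrite mulr1.
    under [X in _ <= _ * X]eq_bigr => i _ do rewrite expr1n.
    rewrite sumr_const card_ord => hc.
    have : 1 <= (\sum_(i < d) b i ^+ 2) * d%:R.
      apply: le_trans hc; rewrite -[X in X <= _](expr1n _ 2).
      by apply: sq_le.
    move=> hh; rewrite expr1n.
    have : 0 < \sum_(i < d) b i ^+ 2.
      rewrite lt_neqAle Sb20 andbT; apply/negP => /eqP h0; rewrite -h0 mul0r in hh; lra.
    lra.
  - move=> M hb.
    have Mge0 : 0 <= M by apply: le_trans (b0 0%N) (hb 0%N d0).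
    case: hx1 => [hx|ex]; first lra.
    have := le_trans h (hM M hb); rewrite ex expr1n.
    under eq_bigr => i _ do rewrite expr1n.
    rewrite sumr_const card_ord => hh.
    have : 0 < M.
      rewrite lt_neqAle Mge0 andbT; apply/negP => /eqP h0; rewrite -h0 mul0r in hh; lra.
    lra.
  - by move=> S hS; rewrite le_max x1.
have xp : 0 < x ^+ d by apply: exprn_gt0; lra.
split; [|split].
- move=> B hB.
  have x2 : 1 < x ^+ 2 by rewrite expr2; nra.
  have g := subrX1 (x ^+ 2) d.
  set G := \sum_(i < d) (x ^+ 2) ^+ i in hCS g.
  have h2 : (x ^+ d) ^+ 2 <= (\sum_(i < d) b i * x ^+ i) ^+ 2.
    by apply: sq_le.
  have Gp : 0 <= G by apply: sumr_ge0 => i _; apply: exprn_ge0; exact: sqr_ge0.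
  have h3 : (x ^+ d) ^+ 2 <= B * G.
    exact: le_trans (le_trans h2 hCS) (ler_wpM2r Gp hB).
  rewrite -exprM mulnC exprM in g.
  have e : (x ^+ 2 - 1) * (x ^+ d) ^+ 2 <= B * ((x ^+ d) ^+ 2 - 1).
    rewrite g; have : (x ^+ 2 - 1) * (x ^+ d) ^+ 2 <= (x ^+ 2 - 1) * (B * G).
      by apply: ler_wpM2l => //; lra.
    move=> hh; apply: le_trans hh _; lra.
  have Bp : 0 < B.
    have : 0 < (x ^+ d) ^+ 2 by exact: exprn_gt0 xp.
    case: (lerP B 0) => // Bn.
    have : B * G <= 0 by rewrite mulr_le0_ge0.
    lra.
  have xd2 : 0 < (x ^+ d) ^+ 2 by exact: exprn_gt0 xp.
  have : (x ^+ 2 - 1) * (x ^+ d) ^+ 2 < B * (x ^+ d) ^+ 2 by nra.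
  rewrite ltr_pM2r //; lra.
- move=> M hb.
  have g := subrX1 x d.
  set G := \sum_(i < d) x ^+ i in hM g.
  have h3 := le_trans h (hM M hb).
  have Mp : 0 < M.
    case: (lerP M 0) => // Mn.
    have : M * G <= 0.
      rewrite mulr_le0_ge0 // /G; apply: sumr_ge0 => i _; exact: exprn_ge0.
    lra.
  have e : (x - 1) * x ^+ d <= M * (x ^+ d - 1).
    rewrite g; have : (x - 1) * x ^+ d <= (x - 1) * (M * G) by apply: ler_wpM2l => //; lra.
    move=> hh; apply: le_trans hh _; lra.
  have : (x - 1) * x ^+ d < M * x ^+ d by nra.
  rewrite ltr_pM2r //; lra.
- move=> S hS.
  have h3 : \sum_(i < d) b i * x ^+ i <= (\sum_(i < d) b i) * x ^+ d.-1.
    rewrite mulr_suml; apply: ler_sum => i _; apply: ler_wpM2l => //.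
    apply: ler_weXn2l; first lra.
    by rewrite -ltnS prednK.
  have xd : x ^+ d = x * x ^+ d.-1 by rewrite -exprS prednK.
  have xd1 : 0 < x ^+ d.-1 by apply: exprn_gt0; lra.
  have : x * x ^+ d.-1 <= S * x ^+ d.-1.
    rewrite -xd; apply: le_trans h (le_trans h3 _); by apply: ler_wpM2r => //; exact: ltW.
  rewrite ler_pM2r // => hx; rewrite le_max; apply/orP; right; lra.
Qed.

Lemma abs_scale m c (x : cd R m) : cd_abs (cd_mul (cd_real m c) x) = `|c| * cd_abs x.
Proof.
rewrite /cd_abs !cd_nE mul_reall ip_scalel ip_scaler mulrA -expr2 sqrtrM ?sqr_ge0 //.
by rewrite sqrtr_sqr.
Qed.

Lemma key m (r : cd R m) (s : seq (cd R m)) (d : nat) (L : R) :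
  size s = d.+1 -> nth (cd_zero R m) s d = cd_real m L ->
  cd_peval s r = cd_zero R m ->
  L * cd_abs r ^+ (2 * d) <= \sum_(i < d) cd_abs (nth (cd_zero R m) s i) * cd_abs r ^+ (d + i).
Proof.
move=> hs hl h.
have := congr1 (fun z => ip z (cd_pow r d)) h.
rewrite /cd_peval /= ip0l (big_morph (fun z => ip z (cd_pow r d)) (fun x y => ip_addl x y _) (ip0l _)).
rewrite hs big_ord_recr /= hl lead_term => e.
have : \sum_(i < d) - (cd_abs (nth (cd_zero R m) s i) * cd_abs r ^+ (d + i)) <=
       \sum_(i < d) ip (cd_mul (nth (cd_zero R m) s i) (cd_pow r i)) (cd_pow r d).
  by apply: ler_sum => i _; exact: term_bound.
rewrite sumrN; lra.
Qed.

Lemma divide (L x : R) (d : nat) (beta : nat -> R) : 0 < L -> 0 <= x ->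
  (forall i, 0 <= beta i) ->
  L * x ^+ (2 * d) <= \sum_(i < d) beta i * x ^+ (d + i) ->
  x ^+ d <= \sum_(i < d) (beta i / L) * x ^+ i.
Proof.
move=> L0 x0 b0 h.
have S0 : 0 <= \sum_(i < d) (beta i / L) * x ^+ i.
  apply: sumr_ge0 => i _; apply: mulr_ge0; last exact: exprn_ge0.
  by apply: divr_ge0 => //; exact: ltW.
case: (posnP d) => [d0|dp].
  move: h; rewrite d0 big_ord0 muln0 expr0 mulr1; lra.
case: (lerP x 0) => [xl|xp].
  have x00 : x = 0 by lra.
  by move: S0; rewrite x00 expr0n gtn_eqF.
have xdp : 0 < x ^+ d by exact: exprn_gt0 xp.
have e : \sum_(i < d) beta i * x ^+ (d + i) = x ^+ d * \sum_(i < d) beta i * x ^+ i.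
  by rewrite mulr_sumr; apply: eq_bigr => i _; rewrite exprD; ring.
rewrite e mulnC exprM expr2 mulrA [L * _]mulrC -mulrA ler_pM2l // in h.
under eq_bigr => i _ do rewrite mulrAC.
rewrite -mulr_suml ler_pdivlMr //; lra.
Qed.
End Alg.

Theorem corollary4p12 (R : realType) (m : nat) (a : seq (cd R m)) :
  (0 < size a)%N ->
  let f := rcons a (cd_one R m) in
  forall r : cd R m,
    (cd_peval f r = cd_zero R m \/ cd_peval (cd_deriv f) r = cd_zero R m) ->
    cd_abs r < R1 a /\ cd_abs r < R2 a /\ cd_abs r <= R3 a.
Proof.
move=> an f r H.
set x := cd_abs r.
have x0 : 0 <= x by exact: sqrtr_ge0.
set A := fun k => cd_abs (nth (cd_zero R m) a k).
have A0 : forall k, 0 <= A k by move=> k; exact: sqrtr_ge0.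
have fin : forall (d : nat) (b : nat -> R), (forall i, 0 <= b i) ->
    x ^+ d <= \sum_(i < d) b i * x ^+ i ->
    \sum_(i < d) b i ^+ 2 <= \sum_(k < size a) A k ^+ 2 ->
    (forall i, (i < d)%N -> b i <= \big[Num.max/0]_(k < size a) A k) ->
    \sum_(i < d) b i <= \sum_(k < size a) A k ->
    x < R1 a /\ x < R2 a /\ x <= R3 a.
  move=> d b b0 h hB hM hS.
  have [h1 [h2 h3]] := real_bounds b0 x0 h.
  split; [|split].
  - rewrite /R1 -(ger0_norm x0) -sqrtr_sqr ltr_sqrt; first exact: h1.
    by apply: ltr_pwDl => //; apply: sumr_ge0 => k _; exact: sqr_ge0.
  - exact: h2.
  - exact: h3.
have Mb : forall k, (k < size a)%N -> A k <= \big[Num.max/0]_(k < size a) A k.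
  by move=> k hk; exact: (le_bigmax 0 (fun j : 'I_(size a) => A j) (Ordinal hk)).
have fnth : forall k, (k < size a)%N -> nth (cd_zero R m) f k = nth (cd_zero R m) a k.
  by move=> k hk; rewrite /f nth_rcons hk.
have flast : nth (cd_zero R m) f (size a) = cd_real m 1.
  by rewrite /f nth_rcons ltnn eqxx.
case: H => Hf.
  have hk := key (d := size a) (L := 1) (size_rcons a _) flast Hf.
  have hd := divide (beta := fun i => cd_abs (nth (cd_zero R m) f i)) ltr01 x0
    (fun i => sqrtr_ge0 _) hk.
  apply: (fin _ (fun i => cd_abs (nth (cd_zero R m) f i) / 1) _ hd).
  - by move=> i /=; rewrite divr1; exact: sqrtr_ge0.
  - by apply: ler_sum => i _ /=; rewrite divr1 fnth.
  - by move=> i hi /=; rewrite divr1 fnth //; exact: Mb.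
  - by apply: ler_sum => i _ /=; rewrite divr1 fnth.
set d := (size a).-1.
have na : size a = d.+1 by rewrite prednK.
have sz : size (cd_deriv f) = d.+1 by rewrite /cd_deriv size_map size_iota size_rcons.
have dn : forall j, (j < d.+1)%N ->
    nth (cd_zero R m) (cd_deriv f) j = cd_mul (cd_real m (j.+1)%:R) (nth (cd_zero R m) f j.+1).
  move=> j hj; rewrite /cd_deriv (nth_map 0%N); last by rewrite size_iota size_rcons /= na.
  by rewrite nth_iota // size_rcons /= na.
have dlast : nth (cd_zero R m) (cd_deriv f) d = cd_real m (d.+1)%:R.
  by rewrite dn // -na flast mul_reall scale_real mulr1.
have hk := key sz dlast Hf.
have Lp : 0 < (d.+1)%:R :> R by rewrite ltr0n.
have hd := divide (beta := fun i => cd_abs (nth (cd_zero R m) (cd_deriv f) i)) Lp x0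
    (fun i => sqrtr_ge0 _) hk.
set b := fun i => cd_abs (nth (cd_zero R m) (cd_deriv f) i) / (d.+1)%:R.
have b0 : forall i, 0 <= b i.
  by move=> i; apply: divr_ge0; [exact: sqrtr_ge0 | exact: ltW].
have bA : forall i, (i < d)%N -> b i <= A i.+1.
  move=> i hi; rewrite /b dn; last by apply: ltn_trans hi _.
  rewrite abs_scale fnth; last by rewrite na.
  rewrite ger0_norm ?ler0n // ler_pdivrMr // mulrC.
  by apply: ler_wpM2l; [exact: A0 | rewrite ler_nat ltnS ltnW].
apply: (fin _ b b0 hd).
- rewrite na big_ord_recl; apply: le_trans (ler_wpDl (sqr_ge0 _) (lexx _)).
  by apply: ler_sum => i _; apply: sq_le; [exact: b0 | exact: bA].
- move=> i hi; apply: le_trans (bA i hi) _; apply: Mb; by rewrite na.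
- rewrite na big_ord_recl; apply: le_trans (ler_wpDl (A0 _) (lexx _)).
  by apply: ler_sum => i _; exact: bA.
Qed.
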